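(* Let $(M,d)$ be a bounded metric space with uniform relative normal structure such that $\mathcal A(M)$ is compact, and let $\mathcal S$ be a group acting on $M$ such that each $s\in\mathcal S$ is orbit-nonexpansive. Then there is $x\in M$ with $s(x)=x$ for all $s\in\mathcal S$.
   Context: For a metric space $(M,d)$, a mapping $T:M\to M$ and $x\in M$, the orbit of $x$ is $o_T(x)=\{x\}\cup\{T^nx:n\in\mathbb N\}$. For $x\in M$ and bounded $A\subseteq M$, $D(x,A)=\sup\{d(x,a):a\in A\}$ and $\delta(A)=\sup\{d(x,y):x,y\in A\}$. $T$ is orbit-nonexpansive if $d(Tx,Ty)\le D(x,o_T(y))$ for all $x,y\in M$. A group $\mathcal S$ acts on $M$ if each $s\in\mathcal S$ defines a map $M\to M$, the identity acts as the identity map, and $(s\cdot t)(x)=s(t(x))$. A subset of $M$ is admissible if it is an intersection of closed balls of $M$; $\mathcal A(M)$ denotes the family of admissible sets. $\mathcal A(M)$ is compact if every subfamily of $\mathcal A(M)$ all of whose finite intersections are nonempty has nonempty intersection. $(M,d)$ has uniform relative normal structure (URNS) if there is $c\in(0,1)$ such that for every admissible $A$ with $\delta(A)>0$: (i) there exists $z_A\in M$ with $D(z_A,A)\le c\,\delta(A)$; and (ii) every $x\in M$ with $D(x,A)\le c\,\delta(A)$ satisfies $d(x,z_A)\le c\,\delta(A)$. *)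

(* Defs.v *)
From HB Require Import structures.
From mathcomp Require Import all_boot all_order all_algebra.
From mathcomp Require Import all_classical all_reals.
Set Implicit Arguments. Unset Strict Implicit. Unset Printing Implicit Defensive.
Import Order.TTheory GRing.Theory Num.Theory.
Local Open Scope ring_scope.
Local Open Scope classical_set_scope.

Section MetricDefs.
Variables (R : realType) (M : Type) (d : M -> M -> R).

Definition is_metric : Prop :=
  (forall x y, 0 <= d x y) /\ (forall x y, d x y = 0 <-> x = y) /\
  (forall x y, d x y = d y x) /\ (forall x y z, d x z <= d x y + d y z).

Definition metric_bounded : Prop := exists B : R, forall x y, d x y <= B.

Definition orbit (T : M -> M) (x : M) : set M :=
  [set y | exists n : nat, y = iter n T x].

Definition Dist (x : M) (A : set M) : R := sup [set d x a | a in A].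

Definition diam (A : set M) : R :=
  sup [set r | exists x y, A x /\ A y /\ r = d x y].

Definition orbit_nonexpansive (T : M -> M) : Prop :=
  forall x y, d (T x) (T y) <= Dist x (orbit T y).

Definition closed_ball (x : M) (r : R) : set M := [set y | d x y <= r].

Definition admissible (A : set M) : Prop :=
  exists F : set (M * R), (forall p, F p -> 0 <= p.2) /\
    A = [set y | forall p, F p -> closed_ball p.1 p.2 y].

Definition admissible_compact : Prop :=
  forall F : set (set M), (forall A, F A -> admissible A) ->
    (forall G : set (set M), G `<=` F -> finite_set G ->
        exists x, forall A, G A -> A x) ->
    exists x, forall A, F A -> A x.

Definition URNS : Prop :=
  exists c : R, 0 < c < 1 /\
    forall A : set M, admissible A -> 0 < diam A ->
      exists zA : M, Dist zA A <= c * diam A /\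
        forall x, Dist x A <= c * diam A -> d x zA <= c * diam A.

End MetricDefs.

(* Main.v *)
Require Import Defs.
From HB Require Import structures.
From mathcomp Require Import all_boot all_order all_algebra.
From mathcomp Require Import all_classical all_reals.
From mathcomp Require Import ring lra.
Import Order.TTheory GRing.Theory Num.Theory.
Local Open Scope ring_scope.
Local Open Scope classical_set_scope.
Set Implicit Arguments. Unset Strict Implicit.

Lemma ch X Y (P : X -> Y -> Prop) :
  (forall x, exists y, P x y) -> exists f, forall x, P x (f x).
Proof. by move=> /boolp.choice [f hf]; exists f. Qed.

Lemma bern (R : realType) (c : R) n : 0 < c < 1 -> c ^+ n * (1 + n%:R * (1 - c)) <= 1.
Proof.
case/andP => c0 c1.
elim: n => [|n IH]; first by rewrite expr0 mul0r addr0 mulr1.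
have p0 : 0 <= c ^+ n by rewrite exprn_ge0 // ltW.
have p1 : c ^+ n <= 1 by rewrite exprn_ile1 // ltW.
rewrite exprS -natr1.
have h1 : c * (c ^+ n * (1 + n%:R * (1 - c))) <= c * 1 by rewrite ler_wpM2l // ltW.
have h2 : c * c ^+ n <= 1 by rewrite -exprS exprn_ile1 // ltW.
have h3 : (1 - c) * (c * c ^+ n) <= (1 - c) * 1 by rewrite ler_wpM2l // subr_ge0 ltW.
nra.
Qed.

Lemma geo (R : realType) (c K e : R) : 0 < c < 1 -> (forall n, e <= c ^+ n * K) -> e <= 0.
Proof.
move=> hc h; rewrite leNgt; apply/negP => e0.
have [c0 c1] : 0 < c /\ c < 1 by case/andP: hc.
have K0 : 0 <= K by have := h 0%N; rewrite expr0 mul1r => ?; lra.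
have H n : e * (n%:R * (1 - c)) <= K.
  have := h n; have := bern n hc; have p0 : 0 <= c ^+ n by rewrite exprn_ge0 // ltW.
  have n0 : 0 <= n%:R :> R by [].
  move=> hb he.
  have q0 : 0 <= 1 + n%:R * (1 - c) by rewrite addr_ge0 // mulr_ge0 // subr_ge0 ltW.
  have k1 : e * (1 + n%:R * (1 - c)) <= (c ^+ n * K) * (1 + n%:R * (1 - c)) by rewrite ler_wpM2r.
  have k2 : K * (c ^+ n * (1 + n%:R * (1 - c))) <= K * 1 by rewrite ler_wpM2l.
  nra.
set t := K / (e * (1 - c)).
have t0 : 0 <= t by rewrite /t divr_ge0 // mulr_ge0 // ?ltW // subr_gt0.
have := archi_boundP t0; set n := Num.bound t => hn.
have := H n.
have ec : 0 < e * (1 - c) by rewrite mulr_gt0 // subr_gt0.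
have : K < n%:R * (e * (1 - c)) by rewrite -ltr_pdivrMr.
lra.
Qed.

Lemma nat_bound (S : set nat) : finite_set S -> exists N, forall k, S k -> (k <= N)%N.
Proof.
move=> /finite_fsetP [X ->]; exists (\max_(k <- finmap.enum_fset X) k) => k kX.
by apply: (@leq_bigmax_seq _ _ xpredT id).
Qed.

Section Pf.
Variables (R : realType) (M : Type) (d : M -> M -> R).
Variables (G : Type) (mul : G -> G -> G) (one : G) (inv : G -> G) (act : G -> M -> M).
Hypothesis mulgV : forall a, mul a (inv a) = one.
Hypothesis act1 : forall x, act one x = x.
Hypothesis actM : forall s t x, act (mul s t) x = act s (act t x).
Hypothesis hmet : is_metric d.
Variable B : R.
Hypothesis hB : forall x y, d x y <= B.
Hypothesis hon : forall s, orbit_nonexpansive d (act s).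

Lemma dsym x y : d x y = d y x.
Proof. by case: hmet => _ [_ [h _]]. Qed.
Lemma dtri x y z : d x z <= d x y + d y z.
Proof. by case: hmet => _ [_ [_ h]]. Qed.
Lemma dge0 x y : 0 <= d x y.
Proof. by case: hmet. Qed.
Lemma dxx x : d x x = 0.
Proof. by case: hmet => _ [h _]; apply/h. Qed.

Lemma Dist_ub (A : set M) x a : A a -> d x a <= Dist d x A.
Proof.
move=> Aa; apply: sup_upper_bound; last by exists a.
split; first by exists (d x a); exists a.
by exists B => _ [b _ <-].
Qed.

Lemma Dist_le (A : set M) x a0 r : A a0 -> (forall a, A a -> d x a <= r) ->
  Dist d x A <= r.
Proof.
move=> Aa0 h; apply: ge_sup; first by exists (d x a0); exists a0.
by move=> _ [a Aa <-]; apply: h.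
Qed.

Lemma diam_ub (A : set M) x y : A x -> A y -> d x y <= diam d A.
Proof.
move=> Ax Ay; apply: sup_upper_bound; last by exists x, y.
split; first by exists (d x y), x, y.
by exists B => _ [a [b [_ [_ ->]]]].
Qed.

Lemma diam_le (A : set M) a0 r : A a0 -> (forall x y, A x -> A y -> d x y <= r) ->
  diam d A <= r.
Proof.
move=> Aa0 h; apply: ge_sup; first by exists (d a0 a0), a0, a0.
by move=> _ [a [b [Aa [Ab ->]]]]; apply: h.
Qed.

Definition inv_set (S : set M) := forall g s, S s -> S (act g s).

Lemma key (S : set M) x r : inv_set S -> (forall s, S s -> d s x <= r) ->
  forall g s, S s -> d s (act g x) <= r.
Proof.
move=> iS h g s Ss.
set b := act (inv g) s.
have Sb : S b by apply: iS.
have -> : s = act g b by rewrite /b -actM mulgV act1.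
rewrite dsym; apply: le_trans (hon g x b) _.
apply: (@Dist_le _ _ b) => //; first by exists 0%N.
move=> _ [n ->]; rewrite dsym; apply: h.
by elim: n => //= n IH; apply: iS.
Qed.

Variable c : R.
Hypothesis c01 : 0 < c < 1.
Hypothesis hU : forall A : set M, admissible d A -> 0 < diam d A ->
      exists zA : M, Dist d zA A <= c * diam d A /\
        forall x, Dist d x A <= c * diam d A -> d x zA <= c * diam d A.

Definition PP (A : set M) := (exists x, A x) /\ inv_set A /\ admissible d A.

Lemma diam_ge0 (A : set M) x : A x -> 0 <= diam d A.
Proof. by move=> Ax; rewrite -(dxx x); apply: diam_ub. Qed.

Lemma step A : PP A -> exists A', PP A' /\ diam d A' <= c * diam d A /\
   forall a x, A a -> A' x -> d a x <= c * diam d A.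
Proof.
case=> [[a0 Aa0] [iA adA]].
have dA0 := diam_ge0 Aa0.
have [c0 c1] : 0 < c /\ c < 1 by case/andP: c01.
have [dpos|dle0] := ltP 0 (diam d A); last first.
  have d0 : diam d A = 0 by apply/le_anti/andP.
  exists A; split; first by split; [exists a0|].
  rewrite d0 mulr0; split => //.
  by move=> a x Aa Ax; rewrite -d0; apply: diam_ub.
have [z [hz1 hz2]] := hU adA dpos.
set r := c * diam d A.
have r0 : 0 <= r by rewrite /r mulr_ge0 // ltW.
pose Z := [set y | forall a, A a -> d a y <= r].
pose A' := [set y | Z y /\ forall w, Z w -> d w y <= r].
have Zz : Z z.
  by move=> a Aa; rewrite dsym; apply: le_trans hz1; apply: Dist_ub.
have iZ : inv_set Z by move=> g y Zy; apply: key.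
exists A'; split; [split; [|split]|split].
- exists z; split => // w Zw; apply: hz2.
  by apply: (Dist_le Aa0) => a Aa; rewrite dsym; apply: Zw.
- move=> g y [Zy h]; split; first by apply: iZ.
  by apply: key.
- exists [set p | (A p.1 \/ Z p.1) /\ p.2 = r]; split; first by move=> p [_ ->].
  apply/seteqP; split => y /=.
    move=> [Zy h] [p q] /= [[Ap|Zp] ->]; rewrite /closed_ball /=.
      by apply: Zy.
    by apply: h.
  move=> h; split.
    by move=> a Aa; apply: (h (a, r)); split => //; left.
  by move=> w Zw; apply: (h (w, r)); split => //; right.
- apply: (@diam_le _ z).
    split => // w Zw; apply: hz2.
    by apply: (Dist_le Aa0) => a Aa; rewrite dsym; apply: Zw.
  by move=> x y [Zx _] [_ hy]; apply: hy.
- by move=> a x Aa [Zx _]; apply: Zx.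
Qed.


Hypothesis hinh : inhabited M.
Hypothesis hcomp : admissible_compact d.

Lemma main : exists x, forall g, act g x = x.
Proof.
have [c0 c1] : 0 < c /\ c < 1 by case/andP: c01.
have PT : PP setT.
  split; first by case: hinh => x; exists x.
  split; first by [].
  exists set0; split => //.
  by apply/seteqP; split => y //= _ p.
have [f hf] : exists f : set M -> set M, forall A, PP A -> PP (f A) /\
    diam d (f A) <= c * diam d A /\
    forall a x, A a -> f A x -> d a x <= c * diam d A.
  apply: (@ch _ _ (fun A A' => PP A -> PP A' /\ diam d A' <= c * diam d A /\
    forall a x, A a -> A' x -> d a x <= c * diam d A)) => A.
  case: (pselect (PP A)) => [/step [A' h]|nP]; first by exists A'.
  by exists A.
pose As n := iter n f setT.
have PAs n : PP (As n) by elim: n => //= n IH; case: (hf _ IH).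
have [xs hxs] : exists xs : nat -> M, forall n, As n (xs n).
  apply: (@ch _ _ (fun n x => As n x)) => n.
  by case: (PAs n) => [[x ?] _]; exists x.
set D0 := diam d setT.
have D00 : 0 <= D0 by apply: (@diam_ge0 _ (xs 0%N)).
have dAs n : diam d (As n) <= c ^+ n * D0.
  elim: n => [|n IH]; first by rewrite expr0 mul1r.
  have [_ [h _]] := hf _ (PAs n).
  rewrite exprS -mulrA; apply: le_trans h _; apply: ler_wpM2l => //; exact: ltW.
have dstep n : d (xs n) (xs n.+1) <= c ^+ n.+1 * D0.
  have [_ [_ h]] := hf _ (PAs n).
  apply: le_trans (h _ _ (hxs n) (hxs n.+1)) _.
  rewrite exprS -mulrA; apply: ler_wpM2l => //; exact: ltW.
have hc1 : 1 - c != 0 by rewrite subr_eq0 gt_eqF.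
pose Rad n := c ^+ n.+1 * D0 / (1 - c).
have Rad0 n : 0 <= Rad n.
  by rewrite /Rad divr_ge0 // ?mulr_ge0 // ?exprn_ge0 // ?subr_ge0 ltW.
have RadS n : Rad n.+1 + c ^+ n.+1 * D0 = Rad n.
  by rewrite /Rad exprS; field.
have nest n k : d (xs n) (xs (n + k)%N) + Rad (n + k)%N <= Rad n.
  elim: k => [|k IH]; first by rewrite addn0 dxx add0r.
  rewrite addnS.
  have := dtri (xs n) (xs (n + k)%N) (xs (n + k).+1).
  have := dstep (n + k)%N; have := RadS (n + k)%N.
  lra.
pose Fb := [set Bl | exists n, Bl = closed_ball d (xs n) (Rad n)].
have [x hx] : exists x, forall Bl, Fb Bl -> Bl x.
  apply: hcomp.
    move=> _ [n ->]; exists [set p | p = (xs n, Rad n)]; split.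
      by move=> p /= ->; exact: Rad0.
    apply/seteqP; split => y /=; first by move=> h p /= ->.
    by move=> h; apply: (h (xs n, Rad n)).
  move=> Gs sG fG.
  have [idx hidx] : exists idx : set M -> nat, forall Bl, Fb Bl ->
      Bl = closed_ball d (xs (idx Bl)) (Rad (idx Bl)).
    apply: (@ch _ _ (fun Bl n => Fb Bl ->
      Bl = closed_ball d (xs n) (Rad n))) => Bl.
    case: (pselect (Fb Bl)) => [[n ->]|nF]; first by exists n.
    by exists 0%N.
  have [N hN] := nat_bound (finite_image idx fG).
  exists (xs N) => Bl GBl.
  rewrite (hidx _ (sG _ GBl)) /closed_ball /=.
  have le : (idx Bl <= N)%N by apply: hN; exists Bl.
  rewrite -(subnKC le).
  have := nest (idx Bl) (N - idx Bl)%N; have := Rad0 (idx Bl + (N - idx Bl))%N.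
  lra.
exists x => g.
have hxn n : d (xs n) x <= Rad n by apply: (hx _ (ex_intro _ n erefl)).
have orbA n k : As n (iter k (act g) (xs n)).
  case: (PAs n) => _ [iA _].
  by elim: k => //= k IH; apply: iA.
have bound n : d (act g x) x <= c ^+ n * (2 * D0 / (1 - c)).
  have h1 : d (act g x) (act g (xs n)) <= Rad n + c ^+ n * D0.
    apply: le_trans (hon g x (xs n)) _.
    apply: (@Dist_le _ _ (xs n)); first by exists 0%N.
    move=> _ [k ->].
    apply: le_trans (dtri x (xs n) _) _.
    have : d (xs n) (iter k (act g) (xs n)) <= diam d (As n).
      by apply: diam_ub.
    have := dAs n; have := hxn n; rewrite (dsym x).
    lra.
  have h2 : d (act g (xs n)) (xs n) <= c ^+ n * D0.
    apply: le_trans (dAs n).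
    by apply: diam_ub => //; apply: (orbA n 1%N).
  have := dtri (act g x) (act g (xs n)) x.
  have := dtri (act g (xs n)) (xs n) x; have := hxn n.
  have -> : c ^+ n * (2 * D0 / (1 - c)) = 2 * Rad n + 2 * (c ^+ n * D0).
    by rewrite /Rad exprS; field.
  lra.
have h0 := geo c01 bound.
have : d (act g x) x = 0 by apply/le_anti/andP; split => //; apply: dge0.
by case: hmet => _ [h _]; move/h.
Qed.

End Pf.

Theorem corollary4p7 (R : realType) (M : Type) (d : M -> M -> R)
  (G : Type) (mul : G -> G -> G) (one : G) (inv : G -> G)
  (act : G -> M -> M) :
  (* (G, mul, one, inv) is a group *)
  (forall a b c, mul a (mul b c) = mul (mul a b) c) ->
  (forall a, mul one a = a) -> (forall a, mul a one = a) ->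
  (forall a, mul (inv a) a = one) -> (forall a, mul a (inv a) = one) ->
  (* act is an action of G on M *)
  (forall x, act one x = x) ->
  (forall s t x, act (mul s t) x = act s (act t x)) ->
  inhabited M ->
  is_metric d -> metric_bounded d -> URNS d -> admissible_compact d ->
  (forall s, orbit_nonexpansive d (act s)) ->
  exists x : M, forall s : G, act s x = x.
Proof.
move=> _ _ _ _ hVr a1 aM hinh hmet [B hB] [c [c01 hU]] hcomp hon.
exact: (@main R M d G mul one inv act hVr a1 aM hmet B hB hon c c01 hU hinh hcomp).
Qed.
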